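(* Consider the two-agent zero-sum dynamic game with $K$ stages, dynamics constraints, and control bound constraints $a^i_t\le u^i_t\le b^i_t$ described in the context. Then the states and controls of any local FBNE at which strict complementarity holds (and whose policies satisfy the standing policy assumption in the context) also satisfy the first-order necessary conditions (COL1)–(COL6) for a local OLNE of the game.
   Context: Two-agent zero-sum discrete-time dynamic game with horizon $K\in\mathbb N$. States $x_t\in\mathbb R^n$, known initial state $x_1$; controls $u^i_t\in\mathbb R^{m_i}$, $i\in\{1,2\}$, subject to componentwise bounds $a^i_t\le u^i_t\le b^i_t$. Dynamics $x_{t+1}=f_t(x_t,u^1_t,u^2_t)$, $f_t$ smooth. Agent 1 has stage costs $\ell_t(x_t,u^1_t,u^2_t)$ and terminal cost $\ell_{K+1}(x_{K+1})$; $\ell^1_t=\ell_t$, $\ell^2_t=-\ell_t$, sufficiently smooth (possibly nonconvex). For agent $i$, $-i$ is the other agent; reordered arguments $\ell^i_t(x_t,u^i_t,u^{-i}_t)$, $f_t(x_t,u^i_t,u^{-i}_t)$. $T_t:=\{t,\dots,K\}$. $\perp$ denotes componentwise complementarity. Open-loop problem of agent $i$: minimize $\sum_{t=1}^K\ell^i_t+\ell^i_{K+1}$ over $x_{2:K+1},u^i_{1:K}$ s.t. dynamics and $a^i_t\le u^i_t\le b^i_t$. First-order conditions: for each $i$ there exist $\lambda^i_t,\underline\nu^i_t,\bar\nu^i_t$ ($t\in[K]$) with (COL1) $\nabla_{x_t}\ell^i_t+(\nabla_{x_t}f_t)^\top\lambda^i_t-\lambda^i_{t-1}=0$, $t=2,\dots,K$;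 (COL2) $\nabla_{u^i_t}\ell^i_t+(\nabla_{u^i_t}f_t)^\top\lambda^i_t-\underline\nu^i_t+\bar\nu^i_t=0$, $t\in[K]$; (COL3) $\nabla_{x_{K+1}}\ell^i_{K+1}-\lambda^i_K=0$; (COL4) dynamics hold; (COL5) $a^i_t\le u^i_t\perp\underline\nu^i_t\ge0$; (COL6) $0\le\bar\nu^i_t\perp u^i_t\le b^i_t$. Feedback problem of agent $i$ at time $t$, given differentiable policies $\pi^{-i}_s$: minimize $\sum_{s=t}^K\ell^i_s+\ell^i_{K+1}$ over $u^i_{t:K},u^{-i}_{t+1:K},x_{t+1:K+1}$ s.t. dynamics ($s\in T_t$), $u^{-i}_s=\pi^{-i}_s(x_s)$ ($s\in T_{t+1}$), $a^i_s\le u^i_s\le b^i_s$ ($s\in T_t$). First-order (FBNE necessary) conditions: there exist $\lambda^i_s,\underline\nu^i_s,\bar\nu^i_s$ ($s\in T_t$), $\psi^i_s$ ($s\in T_{t+1}$) with (CFB1) $\nabla_{u^{-i}_s}\ell^i_s+(\nabla_{u^{-i}_s}f_s)^\top\lambda^i_s-\psi^i_s=0$, $s\in T_{t+1}$; (CFB2) $\nabla_{u^i_s}\ell^i_s+(\nabla_{u^i_s}f_s)^\top\lambda^i_s-\underline\nu^i_s+\bar\nu^i_s=0$, $s\in T_t$; (CFB3) $\nabla_{x_{K+1}}\ell^i_{K+1}-\lambda^i_K=0$; (CFB4) dynamics for $s\in T_t$; (CFB5) $u^{-i}_s=\pi^{-i}_s(x_s)$, $s\in T_{t+1}$; (CFB6)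 $a^i_s\le u^i_s\perp\underline\nu^i_s\ge0$, $0\le\bar\nu^i_s\perp u^i_s\le b^i_s$, $s\in T_t$; (CFB7) $\nabla_{x_s}\ell^i_s-\lambda^i_{s-1}+(\nabla_{x_s}f_s)^\top\lambda^i_s+(\nabla_{x_s}\pi^{-i}_s)^\top\psi^i_s=0$, $s\in T_{t+1}$. A local FBNE is a trajectory generated by policies $\pi^1_t,\pi^2_t$ that locally solves all these problems for all $t$ and $i$. Strict complementarity: for every component $j$, exactly one of $[u^i_s]_j-[a^i_s]_j$ and $[\underline\nu^i_s]_j$ is zero, and exactly one of $[b^i_s]_j-[u^i_s]_j$ and $[\bar\nu^i_s]_j$ is zero. Standing policy assumption (taken as a consequence of strict complementarity): whenever a bound on $[u^i_s]_j$ is active at the equilibrium, the $j$-th row of $\nabla_{x_s}\pi^i_s(x_s)$ is zero. *)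

(* Defs.v *)
From HB Require Import structures.
From mathcomp Require Import all_boot all_order all_algebra.
From mathcomp Require Import all_classical all_reals all_analysis.
Set Implicit Arguments.
Unset Strict Implicit.
Unset Printing Implicit Defensive.
Import Order.TTheory GRing.Theory Num.Theory.
Import numFieldNormedType.Exports.
Local Open Scope ring_scope.

(* Conventions: vectors are ROW vectors 'rV[R]_p; entries v 0 j.
   Time is indexed by nat: stages t = 1..K, states x 1 .. x K.+1.        *)

Section Derivatives.
Variable R : realType.

(* usual Jacobian matrix (q x p) of f : R^p -> R^q at x, i.e. the transpose
   of the library's 'J f x (which satisfies 'D_v f x = v *m 'J f x). *)
Definition Jac p q (f : 'rV[R]_p -> 'rV[R]_q) (x : 'rV[R]_p) : 'M[R]_(q, p) :=
  ('J f x)^T.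

Definition grad p (g : 'rV[R]_p -> R) (x : 'rV[R]_p) : 'rV[R]_p :=
  Jac (fun y => const_mx (g y) : 'rV[R]_1) x.

Definition compl_lo m (a u nu : 'rV[R]_m) : Prop :=
  forall j, a 0 j <= u 0 j /\ 0 <= nu 0 j /\ (u 0 j - a 0 j) * nu 0 j = 0.
Definition compl_up m (nu u b : 'rV[R]_m) : Prop :=
  forall j, 0 <= nu 0 j /\ u 0 j <= b 0 j /\ nu 0 j * (b 0 j - u 0 j) = 0.

Definition strict_lo m (a u nu : 'rV[R]_m) : Prop :=
  forall j, (u 0 j - a 0 j == 0) != (nu 0 j == 0).
Definition strict_up m (nu u b : 'rV[R]_m) : Prop :=
  forall j, (b 0 j - u 0 j == 0) != (nu 0 j == 0).

Definition in_box m (a u b : 'rV[R]_m) : Prop :=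
  forall j, a 0 j <= u 0 j <= b 0 j.
End Derivatives.

(* Generic agent i, with own control dimension mi and the other agent's
   control dimension mo; li, fi are given with reordered arguments
   (x, u^i, u^{-i}) as in the paper; lT is the terminal cost l^i_{K+1}. *)
Section Agent.
Variables (R : realType) (n mi mo K : nat).
Variable li : nat -> 'rV[R]_n -> 'rV[R]_mi -> 'rV[R]_mo -> R.
Variable lT : 'rV[R]_n -> R.
Variable fi : nat -> 'rV[R]_n -> 'rV[R]_mi -> 'rV[R]_mo -> 'rV[R]_n.
Variables (a b : nat -> 'rV[R]_mi).

Definition OL_conditions (x : nat -> 'rV[R]_n) (ui : nat -> 'rV[R]_mi)
    (uo : nat -> 'rV[R]_mo) (lam : nat -> 'rV[R]_n)
    (nlo nup : nat -> 'rV[R]_mi) : Prop :=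
  (forall t, (2 <= t <= K)%N ->
     grad (fun y => li t y (ui t) (uo t)) (x t)
     + lam t *m Jac (fun y => fi t y (ui t) (uo t)) (x t) - lam t.-1 = 0)
  /\ (forall t, (1 <= t <= K)%N ->
     grad (fun v => li t (x t) v (uo t)) (ui t)
     + lam t *m Jac (fun v => fi t (x t) v (uo t)) (ui t) - nlo t + nup t = 0)
  /\ grad lT (x K.+1) - lam K = 0
  /\ (forall t, (1 <= t <= K)%N -> x t.+1 = fi t (x t) (ui t) (uo t))
  /\ (forall t, (1 <= t <= K)%N -> compl_lo (a t) (ui t) (nlo t))
  /\ (forall t, (1 <= t <= K)%N -> compl_up (nup t) (ui t) (b t)).

Definition FB_conditions (po : nat -> 'rV[R]_n -> 'rV[R]_mo) (t : nat)
    (x : nat -> 'rV[R]_n) (ui : nat -> 'rV[R]_mi) (uo : nat -> 'rV[R]_mo)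
    (lam : nat -> 'rV[R]_n) (nlo nup : nat -> 'rV[R]_mi)
    (psi : nat -> 'rV[R]_mo) : Prop :=
  (forall s, (t < s <= K)%N ->
     grad (fun w => li s (x s) (ui s) w) (uo s)
     + lam s *m Jac (fun w => fi s (x s) (ui s) w) (uo s) - psi s = 0)
  /\ (forall s, (t <= s <= K)%N ->
     grad (fun v => li s (x s) v (uo s)) (ui s)
     + lam s *m Jac (fun v => fi s (x s) v (uo s)) (ui s) - nlo s + nup s = 0)
  /\ grad lT (x K.+1) - lam K = 0
  /\ (forall s, (t <= s <= K)%N -> x s.+1 = fi s (x s) (ui s) (uo s))
  /\ (forall s, (t < s <= K)%N -> uo s = po s (x s))
  /\ (forall s, (t <= s <= K)%N ->
        compl_lo (a s) (ui s) (nlo s) /\ compl_up (nup s) (ui s) (b s))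
  /\ (forall s, (t < s <= K)%N ->
     grad (fun y => li s y (ui s) (uo s)) (x s) - lam s.-1
     + lam s *m Jac (fun y => fi s y (ui s) (uo s)) (x s)
     + psi s *m Jac (po s) (x s) = 0).

Definition FB_strict (t : nat) (ui : nat -> 'rV[R]_mi)
    (nlo nup : nat -> 'rV[R]_mi) : Prop :=
  forall s, (t <= s <= K)%N ->
    strict_lo (a s) (ui s) (nlo s) /\ strict_up (nup s) (ui s) (b s).

Definition cost_from (t : nat) (x : nat -> 'rV[R]_n) (ui : nat -> 'rV[R]_mi)
    (uo : nat -> 'rV[R]_mo) : R :=
  \sum_(t <= s < K.+1) li s (x s) (ui s) (uo s) + lT (x K.+1).

(* (x, ui, uo) locally solves the feedback problem of agent i at time t:
   decision variables u^i_{t:K}, u^{-i}_{t+1:K}, x_{t+1:K+1}; x_t and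
   u^{-i}_t are fixed at their equilibrium values. *)
Definition FB_local_solution (po : nat -> 'rV[R]_n -> 'rV[R]_mo) (t : nat)
    (x : nat -> 'rV[R]_n) (ui : nat -> 'rV[R]_mi) (uo : nat -> 'rV[R]_mo) : Prop :=
  exists eps : R, 0 < eps /\
  forall (x' : nat -> 'rV[R]_n) (ui' : nat -> 'rV[R]_mi) (uo' : nat -> 'rV[R]_mo),
    x' t = x t -> uo' t = uo t ->
    (forall s, (t <= s <= K)%N -> x' s.+1 = fi s (x' s) (ui' s) (uo' s)) ->
    (forall s, (t < s <= K)%N -> uo' s = po s (x' s)) ->
    (forall s, (t <= s <= K)%N -> in_box (a s) (ui' s) (b s)) ->
    (forall s, (t <= s <= K)%N -> `|ui' s - ui s| < eps) ->
    (forall s, (t < s <= K)%N -> `|uo' s - uo s| < eps) ->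
    (forall s, (t < s <= K.+1)%N -> `|x' s - x s| < eps) ->
    cost_from t x ui uo <= cost_from t x' ui' uo'.
End Agent.

(* The zero-sum game: l^1 = l, l^2 = -l, with arguments reordered for
   agent 2. *)
Section Game.
Variables (R : realType) (n m1 m2 K : nat).
Variable l : nat -> 'rV[R]_n -> 'rV[R]_m1 -> 'rV[R]_m2 -> R.
Variable lT : 'rV[R]_n -> R.
Variable f : nat -> 'rV[R]_n -> 'rV[R]_m1 -> 'rV[R]_m2 -> 'rV[R]_n.

Definition l2 : nat -> 'rV[R]_n -> 'rV[R]_m2 -> 'rV[R]_m1 -> R :=
  fun t x v w => - l t x w v.
Definition lT2 : 'rV[R]_n -> R := fun x => - lT x.
Definition f2 : nat -> 'rV[R]_n -> 'rV[R]_m2 -> 'rV[R]_m1 -> 'rV[R]_n :=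
  fun t x v w => f t x w v.

Variables (a1 b1 : nat -> 'rV[R]_m1) (a2 b2 : nat -> 'rV[R]_m2).

Definition local_FBNE (pi1 : nat -> 'rV[R]_n -> 'rV[R]_m1)
    (pi2 : nat -> 'rV[R]_n -> 'rV[R]_m2)
    (x : nat -> 'rV[R]_n) (u1 : nat -> 'rV[R]_m1) (u2 : nat -> 'rV[R]_m2) : Prop :=
  (forall t, (1 <= t <= K)%N ->
     (forall y, differentiable (pi1 t) y) /\ (forall y, differentiable (pi2 t) y))
  /\ (forall t, (1 <= t <= K)%N ->
     [/\ u1 t = pi1 t (x t), u2 t = pi2 t (x t)
       & x t.+1 = f t (x t) (u1 t) (u2 t)])
  /\ (forall t, (1 <= t <= K)%N ->
     in_box (a1 t) (u1 t) (b1 t) /\ in_box (a2 t) (u2 t) (b2 t))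
  /\ (forall t, (1 <= t <= K)%N ->
     FB_local_solution K l lT f a1 b1 pi2 t x u1 u2
     /\ FB_local_solution K l2 lT2 f2 a2 b2 pi1 t x u2 u1).
End Game.

(* Main.v *)
Require Import Defs.
From HB Require Import structures.
From mathcomp Require Import all_boot all_order all_algebra.
From mathcomp Require Import all_classical all_reals all_analysis.
From mathcomp Require Import zify.
Import Order.TTheory GRing.Theory Num.Theory.
Import numFieldNormedType.Exports.
Local Open Scope ring_scope.

Lemma gradN (R : realType) p (g : 'rV[R]_p -> R) z :
  differentiable g z -> grad (fun y => - g y) z = - grad g z.
Proof.
move=> dg.
pose F : 'rV[R]_p -> 'rV[R]_1 := fun y => const_mx (g y).
have dF : differentiable F z.
  have -> : F = (fun y => g y *: (const_mx 1 : 'rV[R]_1)).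
    by apply/funext => y; apply/matrixP => i j; rewrite !mxE mulr1.
  exact: (differentiableZl (const_mx 1 : 'rV[R]_1) dg).
have E := diffN dF.
pose mF := ltac:(match type of E with context [@diff _ _ _ _ _ ?X] => exact X end).
have EF : (fun y => const_mx (- g y)) = mF.
  apply/funext => y; apply/matrixP => i j; rewrite /mF.
  rewrite [in RHS]/GRing.opp /=.
  rewrite !mxE.
  done.
rewrite /grad /Jac /jacobian.
rewrite EF.
rewrite /mF.
apply/matrixP => i j; rewrite !mxE.
have h := congr1 (fun k => k 'e_j) E.
have h2 := congr1 (fun M : 'rV[R]_1 => M 0 i) h.
apply: (etrans h2).
rewrite {1}/GRing.opp /= mxE.
reflexivity.
Qed.

Section Parts.
Variables (R : realType) (n m1 m2 : nat).
Variable F : 'rV[R]_n * 'rV[R]_m1 * 'rV[R]_m2 -> R.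
Hypothesis HF : forall p, differentiable F p.

Lemma diff_part1 y u v : differentiable (fun y => F (y, u, v)) y.
Proof.
have dp : differentiable (fun y : 'rV[R]_n => (y, u, v)) y.
  apply: differentiable_pair; last exact: differentiable_cst.
  apply: differentiable_pair; last exact: differentiable_cst.
  exact: (@ex_diff _ _ _ _ _ id _).
exact: (differentiable_comp dp (HF _)).
Qed.

Lemma diff_part2 y u v : differentiable (fun u => F (y, u, v)) u.
Proof.
have dp : differentiable (fun u : 'rV[R]_m1 => (y, u, v)) u.
  apply: differentiable_pair; last exact: differentiable_cst.
  apply: differentiable_pair; first exact: differentiable_cst.
  exact: (@ex_diff _ _ _ _ _ id _).
exact: (differentiable_comp dp (HF _)).
Qed.

Lemma diff_part3 y u v : differentiable (fun v => F (y, u, v)) v.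
Proof.
have dp : differentiable (fun v : 'rV[R]_m2 => (y, u, v)) v.
  apply: differentiable_pair; first exact: differentiable_cst.
  exact: (@ex_diff _ _ _ _ _ id _).
exact: (differentiable_comp dp (HF _)).
Qed.
End Parts.

Lemma mul_row0 (R : realType) p q (v : 'rV[R]_p) (M : 'M[R]_(p,q)) :
  (forall j, v 0 j != 0 -> row j M = 0) -> v *m M = 0.
Proof.
move=> H; apply/rowP => k; rewrite !mxE; apply: big1 => j _.
have [->|/H hj] := eqVneq (v 0 j) 0; first by rewrite mul0r.
have : (row j M) 0 k = 0 by rewrite hj mxE.
by rewrite mxE => ->; rewrite mulr0.
Qed.

Lemma active (R : realType) m (a u b nlo nup : 'rV[R]_m) :
  strict_lo a u nlo -> strict_up nup u b ->
  forall j, (nup - nlo) 0 j != 0 -> u 0 j = a 0 j \/ u 0 j = b 0 j.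
Proof.
move=> Sl Su j; rewrite !mxE.
have [hl|hl] := eqVneq (nlo 0 j) 0.
  have [hu|hu] := eqVneq (nup 0 j) 0; first by rewrite hl hu subrr eqxx.
  move=> _; right; have := Su j; rewrite (negbTE hu) eqbF_neg negbK subr_eq0.
  by move=> /eqP ->.
move=> _; left; have := Sl j; rewrite (negbTE hl) eqbF_neg negbK subr_eq0.
by move=> /eqP ->.
Qed.

Lemma aux1 (V : zmodType) (A B c d : V) : -A - B - c + d = 0 -> A + B = d - c.
Proof.
move/eqP; rewrite addrC addr_eq0 => /eqP ->; rewrite !opprD !opprK addrK //.
Qed.

Lemma aux2 (V : zmodType) (g a b : V) : g - a + b + 0 = 0 -> a = g + b.
Proof. by rewrite addr0 addrAC => /eqP; rewrite subr_eq0 => /eqP. Qed.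

Lemma aux3 (V : zmodType) (g p : V) : g - p = 0 -> p = g.
Proof. by move/eqP; rewrite subr_eq0 => /eqP. Qed.

Lemma aux4 (V : zmodType) (A c d : V) : A - c + d = 0 -> A = c - d.
Proof.
move/eqP; rewrite addr_eq0 => /eqP h.
by rewrite -[A](addrNK c) h addrC.
Qed.

Arguments aux1 {V A B c d}.
Arguments aux2 {V g a b}.
Arguments aux3 {V g p}.
Arguments aux4 {V A c d}.
Arguments mul_row0 {R p q v M}.
Arguments active {R m a u b nlo nup}.
Arguments gradN {R p g z}.

Theorem theorem2 (R : realType) (n m1 m2 K : nat)
  (l : nat -> 'rV[R]_n -> 'rV[R]_m1 -> 'rV[R]_m2 -> R)
  (lT : 'rV[R]_n -> R)
  (f : nat -> 'rV[R]_n -> 'rV[R]_m1 -> 'rV[R]_m2 -> 'rV[R]_n)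
  (a1 b1 : nat -> 'rV[R]_m1) (a2 b2 : nat -> 'rV[R]_m2)
  (pi1 : nat -> 'rV[R]_n -> 'rV[R]_m1) (pi2 : nat -> 'rV[R]_n -> 'rV[R]_m2)
  (x : nat -> 'rV[R]_n) (u1 : nat -> 'rV[R]_m1) (u2 : nat -> 'rV[R]_m2) :
  (* smoothness (differentiability) of dynamics and costs *)
  (forall t, (1 <= t <= K)%N -> forall p : 'rV[R]_n * 'rV[R]_m1 * 'rV[R]_m2,
     differentiable (fun q : 'rV[R]_n * 'rV[R]_m1 * 'rV[R]_m2 =>
                       f t q.1.1 q.1.2 q.2) p) ->
  (forall t, (1 <= t <= K)%N -> forall p : 'rV[R]_n * 'rV[R]_m1 * 'rV[R]_m2,
     differentiable (fun q : 'rV[R]_n * 'rV[R]_m1 * 'rV[R]_m2 =>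
                       l t q.1.1 q.1.2 q.2) p) ->
  (forall y, differentiable lT y) ->
  (* (x, u1, u2) is a local FBNE generated by pi1, pi2 *)
  local_FBNE K l lT f a1 b1 a2 b2 pi1 pi2 x u1 u2 ->
  (* the FBNE first-order conditions hold, with strict complementarity,
     for every feedback problem (every t and both agents) *)
  (forall t, (1 <= t <= K)%N ->
     exists lam nlo nup psi,
       FB_conditions K l lT f a1 b1 pi2 t x u1 u2 lam nlo nup psi
       /\ FB_strict K a1 b1 t u1 nlo nup) ->
  (forall t, (1 <= t <= K)%N ->
     exists lam nlo nup psi,
       FB_conditions K (l2 l) (lT2 lT) (f2 f) a2 b2 pi1 t x u2 u1 lam nlo nup psi
       /\ FB_strict K a2 b2 t u2 nlo nup) ->
  (* standing policy assumption: active bound => zero row of the policy Jacobian *)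
  (forall s, (1 <= s <= K)%N -> forall j,
     u1 s 0 j = a1 s 0 j \/ u1 s 0 j = b1 s 0 j ->
     row j (Jac (pi1 s) (x s)) = 0) ->
  (forall s, (1 <= s <= K)%N -> forall j,
     u2 s 0 j = a2 s 0 j \/ u2 s 0 j = b2 s 0 j ->
     row j (Jac (pi2 s) (x s)) = 0) ->
  (* conclusion: (COL1)-(COL6) hold for both agents *)
  exists (lam1 : nat -> 'rV[R]_n) (nlo1 nup1 : nat -> 'rV[R]_m1)
         (lam2 : nat -> 'rV[R]_n) (nlo2 nup2 : nat -> 'rV[R]_m2),
    OL_conditions K l lT f a1 b1 x u1 u2 lam1 nlo1 nup1
    /\ OL_conditions K (l2 l) (lT2 lT) (f2 f) a2 b2 x u2 u1 lam2 nlo2 nup2.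
Proof.
move=> Hf Hl HlT _ H1 H2 Hp1 Hp2.
have [K0|Kpos] := posnP K.
  subst K.
  exists (fun _ => grad lT (x 1%N)), (fun _ => 0), (fun _ => 0),
         (fun _ => grad (lT2 lT) (x 1%N)), (fun _ => 0), (fun _ => 0).
  split; (split; [|split; [|split; [|split; [|split]]]]);
    try (by move=> t; lia); by rewrite subrr.
have [lam1 [nlo1 [nup1 [psi1 [[C1 [C2 [C3 [C4 [C5 [C6 C7]]]]]] S1]]]]] :
  exists lam nlo nup psi,
       FB_conditions K l lT f a1 b1 pi2 1 x u1 u2 lam nlo nup psi
       /\ FB_strict K a1 b1 1 u1 nlo nup by apply: H1; lia.
have [lam2 [nlo2 [nup2 [psi2 [[D1 [D2 [D3 [D4 [D5 [D6 D7]]]]]] S2]]]]] :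
  exists lam nlo nup psi,
       FB_conditions K (l2 l) (lT2 lT) (f2 f) a2 b2 pi1 1 x u2 u1 lam nlo nup psi
       /\ FB_strict K a2 b2 1 u2 nlo nup by apply: H2; lia.
pose Fl s := fun q : 'rV[R]_n * 'rV[R]_m1 * 'rV[R]_m2 => l s q.1.1 q.1.2 q.2.
have Hnx : forall s, (1 <= s <= K)%N ->
  grad (fun y => - l s y (u1 s) (u2 s)) (x s) = - grad (fun y => l s y (u1 s) (u2 s)) (x s).
  by move=> s hs; apply: gradN; exact: (@diff_part1 _ _ _ _ _ (Hl s hs)).
have Hnu1 : forall s, (1 <= s <= K)%N ->
  grad (fun w => - l s (x s) w (u2 s)) (u1 s) = - grad (fun w => l s (x s) w (u2 s)) (u1 s).
  by move=> s hs; apply: gradN; exact: (@diff_part2 _ _ _ _ _ (Hl s hs)).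
have Hnu2 : forall s, (1 <= s <= K)%N ->
  grad (fun v => - l s (x s) (u1 s) v) (u2 s) = - grad (fun v => l s (x s) (u1 s) v) (u2 s).
  by move=> s hs; apply: gradN; exact: (@diff_part3 _ _ _ _ _ (Hl s hs)).
have HnT : grad (fun y => - lT y) (x K.+1) = - grad lT (x K.+1).
  by apply: gradN.
have Z1 : forall s, (1 < s <= K)%N -> lam2 s = - lam1 s ->
    psi1 s *m Jac (pi2 s) (x s) = 0.
  move=> s hs P.
  have hs' : (1 <= s <= K)%N by lia.
  have e1 := aux3 (C1 s hs).
  have e2 := D2 s hs'; rewrite /l2 /f2 /= Hnu2 // P mulNmx in e2.
  rewrite e1 (aux1 e2); apply: mul_row0 => j hj; apply: Hp2 => //.
  have [Sl Su] := S2 s hs'.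
  move: hj; apply: (active Sl Su).
have Z2 : forall s, (1 < s <= K)%N -> lam2 s = - lam1 s ->
    psi2 s *m Jac (pi1 s) (x s) = 0.
  move=> s hs P.
  have hs' : (1 <= s <= K)%N by lia.
  have e1 := D1 s hs; rewrite /l2 /f2 /= Hnu1 // P mulNmx in e1.
  have e2 := aux4 (C2 s hs').
  rewrite (aux3 e1) -opprD e2 opprB; apply: mul_row0 => j hj; apply: Hp1 => //.
  have [Sl Su] := S1 s hs'; move: hj; apply: (active Sl Su).
have Pk : forall k, (k < K)%N -> lam2 (K - k)%N = - lam1 (K - k)%N.
  elim=> [_|k IH hk].
    rewrite subn0 (aux3 D3) (aux3 C3) /lT2; exact: HnT.
  have hs : (1 < K - k <= K)%N by lia.
  have P := IH (ltnW hk).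
  have e1 := C7 _ hs; rewrite Z1 // in e1.
  have e2 := D7 _ hs; rewrite Z2 // /l2 /f2 /= Hnx ?P ?mulNmx in e2; last by lia.
  by rewrite subnS (aux2 e2) (aux2 e1) opprD.
have Pall : forall s, (1 <= s <= K)%N -> lam2 s = - lam1 s.
  move=> s hs; have := Pk (K - s)%N; rewrite subKn; last by lia.
  by apply; lia.
exists lam1, nlo1, nup1, lam2, nlo2, nup2; split.
- split; [|split; [|split; [|split; [|split]]]].
  + move=> t ht; have e := C7 t ht; rewrite (Z1 t ht (Pall t _)) in e; last by lia.
    by rewrite (aux2 e) subrr.
  + by move=> t ht; apply: C2; lia.
  + exact: C3.
  + by move=> t ht; apply: C4; lia.
  + by move=> t ht; apply: (C6 t _).1; lia.
  + by move=> t ht; apply: (C6 t _).2; lia.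
- split; [|split; [|split; [|split; [|split]]]].
  + move=> t ht; have e := D7 t ht; rewrite (Z2 t ht (Pall t _)) in e; last by lia.
    by rewrite (aux2 e) subrr.
  + by move=> t ht; apply: D2; lia.
  + exact: D3.
  + by move=> t ht; apply: D4; lia.
  + by move=> t ht; apply: (D6 t _).1; lia.
  + by move=> t ht; apply: (D6 t _).2; lia.
Qed.
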